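(* Consider the algorithm ECCom described in the context, and fix an epoch $i$. If $f_N^{i'}+f_L^{i'}\ge 1/4$, then with high probability $f_N^{i}+f_L^{i}\ge 1/6$.
   Context: Setting. A dynamic system of IDs with at least $n_0$ good IDs at all times; ''with high probability'' means with probability at least $1-n_0^{-c'}$ for a desired constant $c'$ (relative to a lifetime of $O(n_0^{\gamma})$ events, $\gamma\ge1$ a constant). A committee runs algorithm ECCom: it maintains $\mathcal S_{\mathrm{old}}$, the set of IDs present after the most recent purge (start of the epoch), and $\mathcal S$, the current set of IDs. It uses a hash function $h'$, unknown to the IDs and behaving as a uniformly random function to $[0,1)$, and places an ID $v$ in the sample when $h'(v)\le c\log n_0/|\mathcal S_{\mathrm{old}}|$, where $c>0$ is a sufficiently large constant depending on $\gamma$. The sample set $\mathcal S'_{\mathrm{old}}$ consists of the sampled IDs of $\mathcal S_{\mathrm{old}}$ at the start of the epoch; the current sample set $\mathcal S'$ consists of the sampled IDs currently present. A purge is triggered when $|(\mathcal S'\cup\mathcal S'_{\mathrm{old}})\setminus(\mathcal S'\cap\mathcal S'_{\mathrm{old}})|\ge|\mathcal S'_{\mathrm{old}}|/4$. Notation. For epoch $i$: $f_N^i$ is the fraction (relative to $|\mathcal S_{\mathrm{old}}|$) of IDs that joined during the epoch and remain active, and $f_L^i$ is the fraction of IDs of $\mathcal S_{\mathrm{old}}$ that have left; $f_N^{i'}$ and $f_L^{i'}$ are the corresponding fractions for the sample sets (relative to $|\mathcal S'_{\mathrm{old}}|$). *)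

(* Defs.v *)
From HB Require Import structures.
From mathcomp Require Import all_boot all_order all_algebra.
From mathcomp Require Import reals exp.
Set Implicit Arguments. Unset Strict Implicit. Unset Printing Implicit Defensive.
Import Order.TTheory GRing.Theory Num.Theory.
Local Open Scope ring_scope.

Section ECCom.
Variable R : realType.
Variable T : finType. (* all IDs that occur during the epoch *)

Definition fN (Sold S : {set T}) : R := #|S :\: Sold|%:R / #|Sold|%:R.
Definition fL (Sold S : {set T}) : R := #|Sold :\: S|%:R / #|Sold|%:R.

Definition sample_threshold (c : R) (n0 : nat) (Sold : {set T}) : R :=
  c * ln (n0%:R) / #|Sold|%:R.

(* Probability that a given ID v satisfies h'(v) <= q, for h'(v) uniform on [0,1) *)
Definition hit_prob (q : R) : R := Num.min (Num.max q 0) 1.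

(* Law of the random set A = {v | h'(v) <= q} when the values h'(v) are
   independent and uniform on [0,1): each ID is in A independently with
   probability hit_prob q. *)
Definition sample_weight (q : R) (A : {set T}) : R :=
  \prod_(v in A) hit_prob q * \prod_(v in ~: A) (1 - hit_prob q).

Definition sample_prob (q : R) (E : pred {set T}) : R :=
  \sum_(A : {set T} | E A) sample_weight q A.

(* Bad event at a state with current ID set S, for sampled set A:
   S'_old = Sold :&: A, S' = S :&: A,
   f_N^{i'} + f_L^{i'} >= 1/4 but f_N^i + f_L^i < 1/6. *)
Definition bad_state (Sold S A : {set T}) : bool :=
  (4^-1 <= fN (Sold :&: A) (S :&: A) + fL (Sold :&: A) (S :&: A))
  && (fN Sold S + fL Sold S < 6^-1).

End ECCom.

(* Main.v *)
Require Import Defs.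
From HB Require Import structures.
From mathcomp Require Import all_boot all_order all_algebra.
From mathcomp Require Import reals exp sequences.
From mathcomp Require Import ring lra.
Import Order.TTheory GRing.Theory Num.Theory.
Local Open Scope ring_scope.

Lemma hit_prob01 {R : realType} (q : R) : 0 <= hit_prob q <= 1.
Proof.
rewrite /hit_prob; apply/andP; split.
  by rewrite le_min ler01 le_max lexx orbT.
by rewrite ge_min lexx orbT.
Qed.

Lemma weightE {R : realType} {T : finType} (q : R) (A : {set T}) :
  sample_weight q A = \prod_(v : T) (if v \in A then hit_prob q else 1 - hit_prob q).
Proof.
rewrite /sample_weight [X in X * _]big_mkcond [X in _ * X]big_mkcond -big_split /=.
by apply: eq_bigr => v _; rewrite inE; case: (v \in A); rewrite /= ?mulr1 ?mul1r.
Qed.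

Lemma weight_ge0 {R : realType} {T : finType} (q : R) (A : {set T}) :
  0 <= sample_weight q A.
Proof.
have /andP[h0 h1] := hit_prob01 q.
rewrite weightE; apply: prodr_ge0 => v _; case: (v \in A) => //.
by rewrite subr_ge0.
Qed.

Lemma sp_or {R : realType} {T : finType} (q : R) (P Q : pred {set T}) :
  sample_prob q [pred A | P A || Q A] <= sample_prob q P + sample_prob q Q.
Proof.
rewrite /sample_prob big_mkcond [X in _ <= X + _]big_mkcond
  [X in _ <= _ + X]big_mkcond -big_split /=.
apply: ler_sum => A _; have := weight_ge0 q A.
by case: (P A); case: (Q A) => /= h; rewrite ?addr0 ?add0r ?lerDl.
Qed.

Lemma union_bound {R : realType} {T : finType} (q : R) (X : Type)
  (bad : X -> {set T} -> bool) (Ss : seq X) (B : R) :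
  (forall S, sample_prob q [pred A | bad S A] <= B) ->
  sample_prob q [pred A | has (fun S => bad S A) Ss] <= (size Ss)%:R * B.
Proof.
move=> hB; elim: Ss => [|S Ss IH].
  by rewrite /sample_prob big_pred0 ?mul0r.
apply: le_trans (sp_or q [pred A | bad S A] [pred A | has (fun S => bad S A) Ss]) _.
by rewrite /= -add1n natrD mulrDl mul1r lerD.
Qed.
Lemma sum_set_prod {R : realType} {T : finType} (h : T -> bool -> R) :
  \sum_(A : {set T}) \prod_(v : T) h v (v \in A) = \prod_(v : T) (h v true + h v false).
Proof.
have -> : \prod_(v : T) (h v true + h v false) = \prod_(v : T) \sum_(b : bool) h v b.
  by apply: eq_bigr => v _; rewrite big_bool.
rewrite bigA_distr_bigA /=.
rewrite (reindex (fun f : {ffun T -> bool} => [set x | f x])) /=.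
  by apply: eq_bigr => f _; apply: eq_bigr => v _; rewrite inE.
exists (fun A : {set T} => [ffun x => x \in A]) => [f _|A _].
  by apply/ffunP => x; rewrite ffunE inE.
by apply/setP => x; rewrite !inE ffunE.
Qed.

Lemma sum_ind {R : realType} {T : finType} (B : {set T}) :
  \sum_(v : T) ((v \in B)%:R : R) = #|B|%:R.
Proof.
rewrite -natr_sum -sum1_card [in RHS]big_mkcond /=.
by congr (_%:R); apply: eq_bigr => v _; case: (v \in B).
Qed.

Lemma sum_ind_in {T : finType} (A B : {set T}) :
  (\sum_(v in A) nat_of_bool (v \in B) = #|B :&: A|)%N.
Proof.
rewrite -sum1_card [RHS]big_mkcond [LHS]big_mkcond /=.
by apply: eq_bigr => v _; rewrite !inE; case: (v \in A); case: (v \in B).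
Qed.

Lemma bad_count {R : realType} {T : finType} (Sold S A : {set T}) :
  bad_state R Sold S A ->
  (#|Sold :&: A| <= 4 * #|(S :\: Sold) :&: A| + 4 * #|(Sold :\: S) :&: A|)%N.
Proof.
rewrite /bad_state /fN /fL => /andP[h _].
have E1 : (S :&: A) :\: (Sold :&: A) = (S :\: Sold) :&: A.
  by apply/setP => v; rewrite !inE; case: (v \in S); case: (v \in Sold); case: (v \in A).
have E2 : (Sold :&: A) :\: (S :&: A) = (Sold :\: S) :&: A.
  by apply/setP => v; rewrite !inE; case: (v \in S); case: (v \in Sold); case: (v \in A).
move: h; rewrite E1 E2 -mulrDl.
set x := #|(S :\: Sold) :&: A|; set y := #|(Sold :\: S) :&: A|.
have [->|n0] := eqVneq #|Sold :&: A| 0%N.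
  by rewrite invr0 mulr0; lra.
have npos : (0 : R) < #|Sold :&: A|%:R by rewrite ltr0n lt0n.
rewrite ler_pdivlMr // -natrD => h.
rewrite -(ler_nat R) natrD !natrM.
have : #|Sold :&: A|%:R <= 4 * (x%:R + y%:R) :> R.
  by move: h; rewrite natrD; lra.
by rewrite mulrDr.
Qed.

Lemma chernoff {R : realType} {T : finType} (q : R) (Sold S : {set T}) :
  (0 < #|Sold|)%N -> fN R Sold S + fL R Sold S < 6^-1 ->
  sample_prob q [pred A | bad_state R Sold S A]
    <= expR (- (hit_prob q * #|Sold|%:R) / 100).
Proof.
move=> Spos htrue.
have /andP[p0 p1] := hit_prob01 q.
set p := hit_prob q in p0 p1 *.
pose s : R := 11 / 10.
have s1 : 1 <= s by rewrite /s; lra.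
have s0 : 0 < s by rewrite /s; lra.
set D1 := S :\: Sold; set D2 := Sold :\: S.
pose g v : R := s ^+ (4 * (v \in D1) + 4 * (v \in D2)) / s ^+ (v \in Sold).
have g0 v : 0 <= g v by rewrite /g divr_ge0 // exprn_ge0 // ltW.
pose F (A : {set T}) := \prod_(v in A) g v.
have F0 A : 0 <= F A by apply: prodr_ge0.
have F1 A : bad_state R Sold S A -> 1 <= F A.
  move=> /bad_count hc.
  rewrite /F /g prodf_div !prodrXr big_split /= -!big_distrr /= !sum_ind_in.
  rewrite ler_pdivlMr ?exprn_gt0 // mul1r.
  exact: ler_weXn2l.
pose W (A : {set T}) := sample_weight q A.
have step3 : sample_prob q [pred A | bad_state R Sold S A]
    <= \sum_(A : {set T}) W A * F A.
  rewrite /sample_prob big_mkcond /=; apply: ler_sum => A _.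
  case: ifP => hb; first by rewrite ler_peMr ?weight_ge0 ?F1.
  by rewrite mulr_ge0 ?weight_ge0.
have step4 : \sum_(A : {set T}) W A * F A = \prod_(v : T) (p * g v + (1 - p)).
  rewrite -(sum_set_prod (fun v b => if b then p * g v else 1 - p)).
  apply: eq_bigr => A _; rewrite /W weightE /F [X in _ * X]big_mkcond -big_split /=.
  by apply: eq_bigr => v _; case: (v \in A); rewrite ?mulr1.
pose a : R := s ^+ 4 - 1; pose b : R := 1 / s - 1.
have gb v : g v - 1 <= a * (v \in D1)%:R + a * (v \in D2)%:R + b * (v \in Sold)%:R.
  rewrite /g /a /b /s !inE; case: (v \in S); case: (v \in Sold);
    rewrite /= ?mulr1 ?mulr0 ?addr0 ?add0r ?exprS ?expr0; lra.
have step5 : \prod_(v : T) (p * g v + (1 - p)) <= expR (\sum_(v : T) p * (g v - 1)).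
  rewrite expR_sum; apply: ler_prod => v _; apply/andP; split.
    by apply: addr_ge0; [apply: mulr_ge0 | rewrite subr_ge0].
  by rewrite (_ : _ + _ = 1 + p * (g v - 1)); [exact: expR_ge1Dx | ring].
have step6 : \sum_(v : T) p * (g v - 1)
    <= p * (a * (#|D1|%:R + #|D2|%:R) + b * #|Sold|%:R).
  rewrite -mulr_sumr; apply: ler_wpM2l => //.
  apply: le_trans (ler_sum _ (fun v _ => gb v)) _.
  by rewrite !big_split /= -!mulr_sumr !sum_ind mulrDr.
have hd : #|D1|%:R + #|D2|%:R <= #|Sold|%:R / 6 :> R.
  move: htrue; rewrite /fN /fL -mulrDl ltr_pdivrMr ?ltr0n // => h.
  rewrite ler_pdivlMr; last by lra.
  by move: h; rewrite -/D1 -/D2; lra.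
have ha : 0 <= a by rewrite /a /s !exprS expr0; lra.
have hab : a / 6 + b <= - (1 / 100) by rewrite /a /b /s !exprS expr0; lra.
apply: le_trans step3 _; rewrite step4; apply: le_trans step5 _.
rewrite ler_expR; apply: le_trans step6 _.
have n0 : (0 : R) <= #|Sold|%:R by [].
have : a * (#|D1|%:R + #|D2|%:R) + b * #|Sold|%:R <= - (1/100) * #|Sold|%:R.
  apply: le_trans (_ : a * (#|Sold|%:R / 6) + b * #|Sold|%:R <= _).
    by rewrite lerD2r ler_wpM2l.
  have -> : a * (#|Sold|%:R / 6) + b * #|Sold|%:R = (a / 6 + b) * #|Sold|%:R by ring.
  by apply: ler_wpM2r.
move=> h; have := ler_wpM2l p0 h.
set N := #|Sold|%:R; set E := a * _ + _ => h2.
apply: le_trans h2 _; lra.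
Qed.

Theorem lemma6 (R : realType) (gamma c' : R) :
  1 <= gamma -> 0 < c' ->
  exists c0 : R, forall c : R, c0 <= c ->
  forall K : R, 0 < K ->
  exists N0 : nat, forall n0 : nat, (N0 <= n0)%N ->
  forall (T : finType) (Sold : {set T}) (Ss : seq {set T}),
    (n0 <= #|Sold|)%N ->
    (forall S, S \in Ss -> (n0 <= #|S|)%N) ->
    (size Ss)%:R <= K * (n0%:R `^ gamma) ->
    sample_prob (sample_threshold c n0 Sold)
      [pred A : {set T} | has (fun S => bad_state R Sold S A) Ss]
    <= n0%:R `^ (- c').
Proof.
move=> g1 c'0; exists (100 * (gamma + c' + 1)) => c hc K K0.
exists (maxn 2 (Num.truncn K).+1) => n0; rewrite geq_max => /andP[n02 nK].
move=> T Sold Ss hSold _ hsize.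
set n : R := n0%:R.
have n2 : 2 <= n by rewrite /n (ler_nat R 2).
have npos : 0 < n by lra.
have Kn : K <= n.
  apply: ltW; apply: lt_le_trans (truncnS_gt K) _; by rewrite /n ler_nat.
set L := ln n.
have L0 : 0 <= L by apply: ln_ge0; lra.
have eL : expR L = n by rewrite /L lnK // posrE.
have powE y : n `^ y = expR (y * L) by rewrite /powR gt_eqF.
have c0 : 0 < c by apply: lt_le_trans hc; lra.
have Spos : (0 < #|Sold|)%N by apply: leq_trans hSold; apply: leq_trans n02.
have Sr : (0 : R) < #|Sold|%:R by rewrite ltr0n.
set q := sample_threshold c n0 Sold.
have q0 : 0 <= q by rewrite /q /sample_threshold divr_ge0 ?mulr_ge0 // ltW.
have [q1|q1] := leP 1 q.
  have hp : hit_prob q = 1.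
    by rewrite /hit_prob (max_l q0); exact: min_r.
  rewrite /sample_prob big1 ?powR_ge0 // => A /hasP [S _ hb].
  case: (pickP (fun v => v \notin A)) => [v hv|hall].
    by rewrite weightE (bigD1 v) //= (negbTE hv) hp subrr mul0r.
  have hA : A = setT by apply/setP => v; have := hall v; rewrite inE; case: (v \in A).
  move: hb; rewrite hA /bad_state !setIT => /andP[h1 h2]; lra.
have hp : hit_prob q = q.
  by rewrite /hit_prob (max_l q0); exact: min_l (ltW q1).
have em : hit_prob q * #|Sold|%:R = c * L.
  by rewrite hp /q /sample_threshold -/n -/L divfK // gt_eqF.
set B := expR (- (c * L) / 100).
have U : sample_prob q [pred A : {set T} | has (fun S => bad_state R Sold S A) Ss]
    <= (size Ss)%:R * B.
  apply: union_bound => S; have [ht|hf] := ltP (fN R Sold S + fL R Sold S) 6^-1.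
    by rewrite /B -em; exact: chernoff.
  rewrite /sample_prob big1 ?expR_ge0 // => A /andP[_ h]; lra.
apply: le_trans U _.
have hB : B <= expR (- (gamma + c' + 1) * L).
  rewrite /B ler_expR.
  have h : (gamma + c' + 1) * L <= (c / 100) * L by apply: ler_wpM2r => //; lra.
  lra.
apply: le_trans (_ : (K * n `^ gamma) * expR (- (gamma + c' + 1) * L) <= _).
  apply: ler_pM => //; first by rewrite expR_ge0.
have -> : K * n `^ gamma * expR (- (gamma + c' + 1) * L)
    = K * expR (- L) * expR (- c' * L).
  rewrite powE -mulrA -mulrA; congr (_ * _); rewrite -!expRD; congr expR; ring.
rewrite powE ler_piMl ?expR_ge0 // expRN eL.
by rewrite ler_pdivrMr // mul1r.
Qed.
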